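(* Let $A$ be a set of regular cardinals and let $\kappa\in\operatorname{spec}(A)$ with $\kappa<\sup(A)$. Then $\kappa\in\operatorname{spec}(A\cap(\kappa+1))$.
   Context: For a set $A$ of regular cardinals, $\prod A$ is the set of functions $f$ with domain $A$ and $f(a)\in a$ for all $a\in A$, ordered by pointwise domination: $f<g$ iff $f(a)<g(a)$ for all $a\in A$. A subset of $\prod A$ is bounded if some $g\in\prod A$ pointwise dominates all its members. For a directed poset $P$, $\operatorname{spec}(P)$ is the set of regular cardinals $\kappa$ with $P\geq_T\kappa$ (Tukey reducibility: there is a map $P\to\kappa$ sending cofinal sets to cofinal sets), and $\operatorname{spec}(A):=\operatorname{spec}(\prod A,<)$. Equivalently, a regular $\kappa$ is in $\operatorname{spec}(A)$ iff there is a set $\mathcal{F}\subseteq\prod A$ of size $\kappa$ such that every $\mathcal{F}_0\subseteq\mathcal{F}$ of size $\kappa$ is unbounded in $(\prod A,<)$. *)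

(* Defs.v *)
(* cardinals are modelled as initial well-orders. *)

Record WO := {
  car :> Type;
  ord : car -> car -> Prop;
  ord_wf : well_founded ord;
  ord_trans : forall x y z, ord x y -> ord y z -> ord x z;
  ord_total : forall x y, ord x y \/ x = y \/ ord y x
}.

Definition inj_le (X Y : Type) : Prop :=
  exists f : X -> Y, forall a b, f a = f b -> a = b.

Definition card_le (K L : WO) : Prop := inj_le K L.
Definition card_lt (K L : WO) : Prop := inj_le K L /\ ~ inj_le L K.

Definition is_cardinal (W : WO) : Prop :=
  forall x : W, ~ inj_le W {y : W | ord W y x}.

Definition unbounded (W : WO) (S : W -> Prop) : Prop :=
  forall x : W, exists y, S y /\ ord W x y.

Definition is_regular_cardinal (W : WO) : Prop :=
  is_cardinal W /\ inj_le nat W /\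
  forall S : W -> Prop, unbounded W S -> inj_le W {y : W | S y}.

(* A set of regular cardinals, given as an injectively indexed family. *)
Definition is_set_of_regular (I : Type) (A : I -> WO) : Prop :=
  (forall i, is_regular_cardinal (A i)) /\
  (forall i j, inj_le (A i) (A j) -> inj_le (A j) (A i) -> i = j).

Definition Prod (I : Type) (A : I -> WO) : Type := forall i : I, A i.
Definition prod_lt (I : Type) (A : I -> WO) (f g : Prod I A) : Prop :=
  forall i, ord (A i) (f i) (g i).

Definition cofinal (I : Type) (A : I -> WO) (X : Prod I A -> Prop) : Prop :=
  forall p : Prod I A, exists q, X q /\ prod_lt I A p q.

Definition tukey_ge (I : Type) (A : I -> WO) (K : WO) : Prop :=
  exists g : Prod I A -> K,
    forall X : Prod I A -> Prop, cofinal I A X ->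
      unbounded K (fun b : K => exists q, X q /\ g q = b).

Definition in_spec (I : Type) (A : I -> WO) (K : WO) : Prop :=
  is_regular_cardinal K /\ tukey_ge I A K.

(* A cap (K+1) : the members a of A with a <= K *)
Definition restrict_le (I : Type) (A : I -> WO) (K : WO) :
  {i : I | card_le (A i) K} -> WO :=
  fun j => A (proj1_sig j).

(* Main.v *)
Require Import Defs.
From Stdlib Require Import Classical ClassicalEpsilon ProofIrrelevance.

Lemma no_max (W : WO) : is_cardinal W -> inj_le nat W -> forall x : W, exists y, ord W x y.
Proof.
  intros Hc [e He] m. apply NNPP; intro Hn.
  assert (Hle : forall y, y = m \/ ord W y m).
  { intro y. destruct (ord_total W y m) as [h|[h|h]]; auto. exfalso; apply Hn; eauto. }
  pose (h := fun w : W => match excluded_middle_informative (exists n, e n = w) with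
    | left H => e (S (proj1_sig (constructive_indefinite_description _ H)))
    | right _ => w end).
  assert (h_inj : forall a b, h a = h b -> a = b).
  { intros a b; unfold h.
    destruct (excluded_middle_informative (exists n, e n = a)) as [Ha|Ha];
    destruct (excluded_middle_informative (exists n, e n = b)) as [Hb|Hb].
    - destruct (constructive_indefinite_description _ Ha) as [na ea];
      destruct (constructive_indefinite_description _ Hb) as [nb eb]; simpl.
      intro E. apply He in E. injection E; intro; subst; reflexivity.
    - destruct (constructive_indefinite_description _ Ha) as [na ea]; simpl.
      intro E. exfalso; apply Hb; eauto.
    - destruct (constructive_indefinite_description _ Hb) as [nb eb]; simpl.
      intro E. exfalso; apply Ha; eauto.
    - auto. }
  assert (h_miss : forall a, h a <> e 0).
  { intro a; unfold h.
    destruct (excluded_middle_informative (exists n, e n = a)) as [Ha|Ha].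
    - destruct (constructive_indefinite_description _ Ha) as [na ea]; simpl.
      intro E; apply He in E; discriminate.
    - intro E; apply Ha; exists 0; auto. }
  pose (tau := fun z : W => match excluded_middle_informative (z = e 0) with
    | left _ => m
    | right _ => match excluded_middle_informative (z = m) with
                 | left _ => e 0 | right _ => z end end).
  assert (tau_inj : forall a b, tau a = tau b -> a = b).
  { intros a b; unfold tau.
    destruct (excluded_middle_informative (a = e 0));
    destruct (excluded_middle_informative (b = e 0));
    destruct (excluded_middle_informative (a = m));
    destruct (excluded_middle_informative (b = m)); congruence. }
  assert (tau_miss : forall z, z <> e 0 -> tau z <> m).
  { intros z hz; unfold tau.
    destruct (excluded_middle_informative (z = e 0));
    destruct (excluded_middle_informative (z = m)); congruence. }
  assert (L : forall w, ord W (tau (h w)) m).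
  { intro w. destruct (Hle (tau (h w))) as [E|E]; auto.
    exfalso; exact (tau_miss _ (h_miss w) E). }
  apply (Hc m). exists (fun w => exist _ (tau (h w)) (L w)).
  intros a b E. apply (f_equal (@proj1_sig _ _)) in E. simpl in E.
  apply h_inj, tau_inj; auto.
Qed.

Lemma tukey_extract I (A : I -> WO) (K : WO) (g : Prod I A -> K)
  (Hg : forall X, cofinal I A X -> unbounded K (fun b => exists q, X q /\ g q = b)) :
  forall b : K, exists p, forall q, prod_lt I A p q -> ord K b (g q).
Proof.
  intro b. apply NNPP; intro Hn.
  assert (Hc : cofinal I A (fun q => ~ ord K b (g q))).
  { intro p. apply NNPP; intro H2. apply Hn. exists p. intros q Hq.
    apply NNPP; intro H3. apply H2. exists q; auto. }
  destruct (Hg _ Hc b) as [y [[q [Hq E]] Hy]]. subst y. contradiction.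
Qed.

Theorem lemma3p3 (I : Type) (A : I -> WO) (K : WO) :
  is_set_of_regular I A ->
  in_spec I A K ->
  (exists i : I, card_lt K (A i)) ->   (* K < sup A *)
  in_spec {i : I | card_le (A i) K} (restrict_le I A K) K.
Proof.
  intros [Hreg _] [HK [g Hg]] _. split; [exact HK|].
  pose proof (tukey_extract _ _ _ _ Hg) as Hp.
  pose (pf := fun b => proj1_sig (constructive_indefinite_description _ (Hp b))).
  assert (Hpf : forall b q, prod_lt I A (pf b) q -> ord K b (g q)).
  { intro b. exact (proj2_sig (constructive_indefinite_description _ (Hp b))). }
  assert (Hbnd : forall i, ~ card_le (A i) K -> exists x : A i, forall b, ord (A i) (pf b i) x).
  { intros i Hi. apply NNPP; intro Hn. apply Hi.
    assert (Hun : unbounded (A i) (fun y => exists b, pf b i = y)).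
    { intro x. destruct (Hreg i) as [Hc [Hnat _]].
      destruct (no_max _ Hc Hnat x) as [x' Hx'].
      assert (H : exists b, ~ ord (A i) (pf b i) x').
      { apply NNPP; intro H2; apply Hn; exists x'; intro b; apply NNPP; intro H3;
        apply H2; eauto. }
      destruct H as [b Hb]. exists (pf b i). split; [eauto|].
      destruct (ord_total (A i) (pf b i) x') as [h|[h|h]];
        [contradiction| rewrite h; auto | eapply ord_trans; eauto]. }
    destruct (Hreg i) as [_ [_ Hr]]. destruct (Hr _ Hun) as [f Hf].
    exists (fun a => proj1_sig (constructive_indefinite_description _ (proj2_sig (f a)))).
    intros a b E. apply Hf. destruct (f a) as [ya Ha], (f b) as [yb Hb]; simpl in E.
    destruct (constructive_indefinite_description _ Ha) as [ba ea];
    destruct (constructive_indefinite_description _ Hb) as [bb eb]; simpl in E.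
    subst. f_equal. apply proof_irrelevance. }
  pose (ext := fun (r : Prod {i : I | card_le (A i) K} (restrict_le I A K)) (i : I) =>
    match excluded_middle_informative (card_le (A i) K) return A i with
    | left h => r (exist _ i h)
    | right h => proj1_sig (constructive_indefinite_description _ (Hbnd i h))
    end).
  exists (fun r => g (ext r)).
  intros X HX b.
  destruct (HX (fun j => pf b (proj1_sig j))) as [q [Xq Hq]].
  exists (g (ext q)). split; [eauto|].
  apply Hpf. intro i. unfold ext.
  destruct (excluded_middle_informative (card_le (A i) K)) as [h|h].
  - exact (Hq (exist _ i h)).
  - exact (proj2_sig (constructive_indefinite_description _ (Hbnd i h)) b).
Qed.
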